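(* Let $\alpha,\beta$ be positive integers and let $\mathcal{C}\subseteq\mathbb{F}_q^\alpha\times\mathcal{R}^\beta$ be an $\mathbb{F}_q\mathcal{R}$-skew cyclic code of length $(\alpha,\beta)$. Suppose that the order $|\langle\theta\rangle|$ of $\theta$ divides $\beta$. Then the dual code $\mathcal{C}^\perp$ is also an $\mathbb{F}_q\mathcal{R}$-skew cyclic code of length $(\alpha,\beta)$.
   Context: Let $p$ be a prime, $q=p^m$, $\mathbb{F}_q$ the finite field with $q$ elements, and $\mathcal{R}=\mathbb{F}_q[u]/\langle u^2-u\rangle=\mathbb{F}_q+u\mathbb{F}_q$ (so $u^2=u$). Fix an integer $i$ and let $\Theta$ be the automorphism of $\mathbb{F}_q$ given by $\Theta(a)=a^{p^i}$, and $\theta$ the automorphism of $\mathcal{R}$ given by $\theta(a+ub)=a^{p^i}+ub^{p^i}$ ($a,b\in\mathbb{F}_q$). Let $\eta:\mathcal{R}\to\mathbb{F}_q$, $\eta(a+ub)=a$. The set $\mathbb{F}_q^\alpha\times\mathcal{R}^\beta$ is an $\mathcal{R}$-module under $s*(x_0,\dots,x_{\alpha-1},y_0,\dots,y_{\beta-1})=(\eta(s)x_0,\dots,\eta(s)x_{\alpha-1},sy_0,\dots,sy_{\beta-1})$. An $\mathbb{F}_q\mathcal{R}$-skew cyclic code of length $(\alpha,\beta)$ is an $\mathcal{R}$-submodule $\mathcal{C}$ of $\mathbb{F}_q^\alpha\times\mathcal{R}^\beta$ such that for every $c=(x_0,\dots,x_{\alpha-1},y_0,\dots,y_{\beta-1})\in\mathcal{C}$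 also $\sigma(c)=(\Theta(x_{\alpha-1}),\Theta(x_0),\dots,\Theta(x_{\alpha-2}),\theta(y_{\beta-1}),\theta(y_0),\dots,\theta(y_{\beta-2}))\in\mathcal{C}$. For $l=(x_0,\dots,x_{\alpha-1},y_0,\dots,y_{\beta-1})$ and $l'=(x'_0,\dots,x'_{\alpha-1},y'_0,\dots,y'_{\beta-1})$ in $\mathbb{F}_q^\alpha\times\mathcal{R}^\beta$ the inner product is $l\cdot l'=u\sum_{i=0}^{\alpha-1}x_ix'_i+\sum_{j=0}^{\beta-1}y_jy'_j\in\mathcal{R}$, and $\mathcal{C}^\perp=\{l'\in\mathbb{F}_q^\alpha\times\mathcal{R}^\beta : l\cdot l'=0 \text{ for all } l\in\mathcal{C}\}$. *)

(* Defs.v *)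
From HB Require Import structures.
From mathcomp Require Import all_boot all_order all_algebra.
Set Implicit Arguments. Unset Strict Implicit. Unset Printing Implicit Defensive.
Import GRing.Theory.
Local Open Scope ring_scope.

(* The ring R = F_q[u]/<u^2-u> = F_q + u F_q.  An element a + u b is
   represented by the pair (a, b).  Since u^2 = u,
   (a + ub)(c + ud) = ac + u(ad + bc + bd). *)
Definition Rq (F : fieldType) := (F * F)%type.

Definition Rzero (F : fieldType) : Rq F := (0, 0).
Definition Ru (F : fieldType) : Rq F := (0, 1).
Definition Radd (F : fieldType) (r s : Rq F) : Rq F := (r.1 + s.1, r.2 + s.2).
Definition Rmul (F : fieldType) (r s : Rq F) : Rq F :=
  (r.1 * s.1, r.1 * s.2 + r.2 * s.1 + r.2 * s.2).

Definition Reta (F : fieldType) (r : Rq F) : F := r.1.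

Definition Theta (F : fieldType) (p i : nat) (a : F) : F := a ^+ (p ^ i).
Definition theta (F : fieldType) (p i : nat) (r : Rq F) : Rq F :=
  (Theta p i r.1, Theta p i r.2).

Definition is_order_theta (F : fieldType) (p i k : nat) : Prop :=
  (0 < k)%N /\ (forall r : Rq F, iter k (theta p i) r = r) /\
  (forall j, (0 < j < k)%N -> exists r : Rq F, iter j (theta p i) r <> r).

Definition amb (F : fieldType) (alpha beta : nat) :=
  ({ffun 'I_alpha -> F} * {ffun 'I_beta -> Rq F})%type.

Definition amb_zero (F : fieldType) alpha beta : amb F alpha beta :=
  ([ffun _ => 0], [ffun _ => Rzero F]).
Definition amb_add (F : fieldType) alpha beta (c d : amb F alpha beta)
  : amb F alpha beta :=
  ([ffun k => c.1 k + d.1 k], [ffun k => Radd (c.2 k) (d.2 k)]).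
Definition amb_scale (F : fieldType) alpha beta (s : Rq F) (c : amb F alpha beta)
  : amb F alpha beta :=
  ([ffun k => Reta s * c.1 k], [ffun k => Rmul s (c.2 k)]).

Definition sigma (F : fieldType) (p i : nat) alpha beta (c : amb F alpha beta)
  : amb F alpha beta :=
  ([ffun k => Theta p i (c.1 (ord_pred k))],
   [ffun k => theta p i (c.2 (ord_pred k))]).

Definition ip (F : fieldType) alpha beta (c d : amb F alpha beta) : Rq F :=
  Radd (Rmul (Ru F) (\sum_(k < alpha) c.1 k * d.1 k, 0))
       (\big[@Radd F/Rzero F]_(k < beta) Rmul (c.2 k) (d.2 k)).

Definition is_Rsubmodule (F : fieldType) alpha beta (C : amb F alpha beta -> Prop)
  : Prop :=
  C (amb_zero F alpha beta) /\
  (forall c d, C c -> C d -> C (amb_add c d)) /\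
  (forall (s : Rq F) c, C c -> C (amb_scale s c)).

Definition skew_cyclic (F : fieldType) (p i : nat) alpha beta
  (C : amb F alpha beta -> Prop) : Prop :=
  is_Rsubmodule C /\ (forall c, C c -> C (sigma p i c)).

Definition dual (F : fieldType) alpha beta (C : amb F alpha beta -> Prop)
  : amb F alpha beta -> Prop :=
  fun d => forall c, C c -> ip c d = Rzero F.

(* Main.v *)
Require Import Defs.
From mathcomp Require Import all_boot all_order all_algebra all_fingroup.
From mathcomp Require Import ring.
Set Implicit Arguments. Unset Strict Implicit. Unset Printing Implicit Defensive.
Import GRing.Theory.
Local Open Scope ring_scope.

Section Aux.
Variable F : fieldType.
Variables p i : nat.
Hypothesis Hchar : p \in [pchar F].

Lemma ThS j (a : F) : Theta p j.+1 a = (Theta p j a) ^+ p.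
Proof. by rewrite /Theta expnSr exprM. Qed.

Lemma ThD (a b : F) : Theta p i (a + b) = Theta p i a + Theta p i b.
Proof.
elim: i => [|j IH]; first by rewrite /Theta !expr1.
rewrite !ThS IH -!(pFrobenius_autE Hchar) pFrobenius_autD_comm //.
exact: mulrC.
Qed.

Lemma ThM (a b : F) : Theta p i (a * b) = Theta p i a * Theta p i b.
Proof. by rewrite /Theta exprMn. Qed.

Lemma Th0 : Theta p i (0 : F) = 0.
Proof. by rewrite /Theta expr0n expn_eq0 -[p == 0%N]negbK -lt0n (prime_gt0 (pcharf_prime Hchar)). Qed.

Lemma ThB (a b : F) : Theta p i (a - b) = Theta p i a - Theta p i b.
Proof. by apply/eqP; rewrite eq_sym subr_eq -ThD subrK. Qed.

Lemma Th_inj : injective (@Theta F p i).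
Proof.
move=> a b H; apply/eqP; rewrite -subr_eq0.
have : Theta p i (a - b) == 0 by rewrite ThB H subrr.
by rewrite /Theta expf_eq0 => /andP[].
Qed.

Lemma ThSum n (f : 'I_n -> F) : Theta p i (\sum_k f k) = \sum_k Theta p i (f k).
Proof. exact: (big_morph _ ThD Th0). Qed.

Lemma bigR n (f : 'I_n -> Rq F) :
  \big[@Radd F/Rzero F]_(k < n) f k = (\sum_k (f k).1, \sum_k (f k).2).
Proof.
elim: n f => [|n IH] f; first by rewrite !big_ord0.
rewrite big_ord_recl.
transitivity (Radd (f ord0) (\sum_(k < n) (f (lift ord0 k)).1,
                   \sum_(k < n) (f (lift ord0 k)).2)).
  by congr (Radd _); exact: IH.
by rewrite /Radd !big_ord_recl.
Qed.

Variables alpha beta : nat.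

Lemma ipE (c d : amb F alpha beta) : ip c d =
  (\sum_k (c.2 k).1 * (d.2 k).1,
   \sum_k c.1 k * d.1 k + \sum_k (Rmul (c.2 k) (d.2 k)).2).
Proof.
rewrite /ip bigR /Radd /Rmul /= !mul0r !mulr0 !mul1r !addr0 add0r.
by rewrite add0r.
Qed.

Lemma ip_sigma (c d : amb F alpha beta) :
  ip (sigma p i c) (sigma p i d) = theta p i (ip c d).
Proof.
rewrite !ipE /theta /=; congr pair.
  rewrite ThSum [RHS](reindex_inj (@ord_pred_inj _)) /=.
  by apply: eq_bigr => k _; rewrite !ffunE /= ThM.
rewrite ThD !ThSum.
rewrite [X in _ = X + _](reindex_inj (@ord_pred_inj _)) /=.
rewrite [X in _ = _ + X](reindex_inj (@ord_pred_inj _)) /=.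
congr (_ + _); apply: eq_bigr => k _; rewrite !ffunE /= ?ThM //.
by rewrite !ThD !ThM.
Qed.

Lemma ip_scale (s : Rq F) (c d : amb F alpha beta) :
  ip c (amb_scale s d) = ip (amb_scale s c) d.
Proof.
rewrite !ipE /=; congr pair.
  by apply: eq_bigr => k _; rewrite !ffunE /=; ring.
by congr (_ + _); apply: eq_bigr => k _; rewrite !ffunE /Reta /=; ring.
Qed.

Lemma ip_add (c d e : amb F alpha beta) :
  ip c (amb_add d e) = ((ip c d).1 + (ip c e).1, (ip c d).2 + (ip c e).2).
Proof.
rewrite !ipE /=; congr pair.
  by rewrite -big_split; apply: eq_bigr => k _; rewrite !ffunE /=; ring.
rewrite addrACA -!big_split; congr (_ + _); apply: eq_bigr => k _;
  rewrite !ffunE /=; ring.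
Qed.

Lemma ip_zero (c : amb F alpha beta) : ip c (amb_zero F alpha beta) = Rzero F.
Proof.
rewrite ipE /Rzero; congr pair.
  by apply: big1 => k _; rewrite ffunE /= mulr0.
rewrite !big1 ?addr0 // => k _; rewrite ffunE /= ?mulr0 ?addr0 //.
Qed.

Lemma sigma_inj : injective (@sigma F p i alpha beta).
Proof.
move=> [c1 c2] [d1 d2] /= [] H1 H2.
congr pair; apply/ffunP => k.
  move/ffunP/(_ (ordS k)): H1; rewrite !ffunE ordSK.
  exact: Th_inj.
move/ffunP/(_ (ordS k)): H2; rewrite !ffunE ordSK /theta.
case: (c2 k) => a b; case: (d2 k) => a' b' /= [] /Th_inj -> /Th_inj -> //.
Qed.

End Aux.

Theorem theorem3 (F : finFieldType) (p m i : nat)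
  (Hp : prime p) (Hchar : p \in [pchar F]) (Hcard : #|F| = (p ^ m)%N)
  (alpha beta : nat) (Ha : (0 < alpha)%N) (Hb : (0 < beta)%N)
  (C : amb F alpha beta -> Prop)
  (HC : skew_cyclic p i C)
  (Hord : forall k, is_order_theta F p i k -> (k %| beta)%N) :
  skew_cyclic p i (dual C).
Proof.
case: HC => [[C0 [CD CS]] Csig].
split; first split.
- by move=> c _; apply: ip_zero.
split.
- move=> d e Hd He c Cc; rewrite ip_add // Hd // He //= addr0.
  by rewrite /Rzero.
- move=> s d Hd c Cc; rewrite ip_scale; exact: Hd (CS _ _ Cc).
move=> d Hd c Cc.
pose S := perm (@sigma_inj F p i Hchar alpha beta).
pose n := #[S]%g.
have Hit : forall k x, C x -> C (iter k (@sigma F p i alpha beta) x).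
  by elim=> [|k IH] x Cx //=; apply: Csig; apply: IH.
have Hn : iter n (@sigma F p i alpha beta) c = c.
  have H : iter n S c = c.
    rewrite -permX expg_order; exact: perm1.
  rewrite -[RHS]H; apply: eq_iter => x; by rewrite permE.
have n0 : (0 < n)%N by apply: order_gt0.
have -> : c = sigma p i (iter n.-1 (@sigma F p i alpha beta) c).
  by rewrite -iterS prednK.
rewrite ip_sigma // Hd; last exact: Hit.
by rewrite /theta /Rzero /= Th0.
Qed.
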